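(* In the following setting: $n$ training samples with labels in $\{1,\dots,K\}$, indicator matrix $F\in\mathbb{R}^{K\times n}$, $n_k$ samples in class $k$; basis $G_1,\dots,G_r$ ($r\le n$) a subset of the training samples with $r_k\ge1$ basis vectors in class $k$; $F_{G_i}$ the class indicator of $G_i$; $\tilde W\in\mathbb{R}^{r\times n}$ entrywise nonnegative, columns summing to one, full row rank, with $\tilde W_{ij}=0$ whenever $F_{G_i}\neq F_j$; $\tilde W'=\tilde W+\Delta W$ with $\Delta W\in\mathbb{R}^{r\times n}$; $\xi=\|\tilde W^\dagger\|_2\|\Delta W\|_2$, $\delta=\|\Delta W\|_F/\|\tilde W\|_F$, $n_\rho=\sqrt{\max_kn_k/\min_kn_k}$, $r_\rho=\sqrt{\max_kr_k/\min_kr_k}$; $X=F\tilde W^\dagger$, $X'=F\tilde W'^\dagger$, $\gamma=\|X\|_F^2\|\tilde W\|_F^2/\|X\tilde W\|_F^2$, $\gamma'=\|X'\|_F^2\|\tilde W'\|_F^2/\|X'\tilde W'\|_F^2$. If $\xi<1/n_\rho$, then $\delta\le\xi$ and $$\gamma'\le\gamma(1+\delta)^2\Big(\frac{1+r_\rho\xi}{1-n_\rho\xi}\Big)^2\le\gamma\frac{(1+r_\rho\xi)^4}{(1-n_\rho\xi)^2}.$$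
   Context: The columns of $F$ are standard basis vectors of $\mathbb{R}^K$: $F_j=e_k$ iff sample $j$ is in class $k$. $\|\cdot\|_2$ of a matrix is the spectral norm; $M^\dagger$ is the Moore–Penrose pseudo-inverse. *)

(* Defs.v *)
From HB Require Import structures.
From mathcomp Require Import all_boot all_order all_algebra.
From mathcomp Require Import classical_sets reals.
Set Implicit Arguments. Unset Strict Implicit. Unset Printing Implicit Defensive.
Import Order.TTheory GRing.Theory Num.Theory.
Local Open Scope ring_scope.
Local Open Scope classical_set_scope.

Definition fnorm (R : realType) (m n : nat) (A : 'M[R]_(m, n)) : R :=
  Num.sqrt (\sum_(i < m) \sum_(j < n) A i j ^+ 2).

Definition snorm (R : realType) (m n : nat) (A : 'M[R]_(m, n)) : R :=
  sup [set fnorm (A *m x) | x in [set x : 'cV[R]_n | fnorm x <= 1]].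

(* B is the Moore--Penrose pseudo-inverse of A (the four Penrose equations;
   such B exists and is unique). *)
Definition is_pinv (R : realType) (m n : nat)
    (A : 'M[R]_(m, n)) (B : 'M[R]_(n, m)) : Prop :=
  [/\ A *m B *m A = A, B *m A *m B = B,
      (A *m B)^T = A *m B & (B *m A)^T = B *m A].

Definition indicator (R : realType) (K n : nat) (y : 'I_n -> 'I_K) : 'M[R]_(K, n) :=
  \matrix_(k < K, j < n) (y j == k)%:R.

Definition ncls (K n : nat) (y : 'I_n -> 'I_K) (k : 'I_K) : nat :=
  #|[set j | y j == k]|.

Definition ratio_rho (R : realType) (K : nat) (c : 'I_K -> nat) : R :=
  let cmax := (\max_(k < K) c k)%N in
  let cmin := \big[minn/cmax]_(k < K) c k in
  Num.sqrt (cmax%:R / cmin%:R).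

Definition gammaF (R : realType) (K r n : nat)
    (X : 'M[R]_(K, r)) (W : 'M[R]_(r, n)) : R :=
  fnorm X ^+ 2 * fnorm W ^+ 2 / fnorm (X *m W) ^+ 2.

(* Main.v *)
Require Import Defs.
From HB Require Import structures.
From mathcomp Require Import all_boot all_order all_algebra.
From mathcomp Require Import classical_sets reals.
From mathcomp Require Import ring lra.
Import Order.TTheory GRing.Theory Num.Theory.
Local Open Scope ring_scope.

Set Implicit Arguments. Unset Strict Implicit. Unset Printing Implicit Defensive.

Section Fro.
Variable R : realType.

Definition fn2 m n (A : 'M[R]_(m, n)) := \sum_(i < m) \sum_(j < n) A i j ^+ 2.
Definition dotm m n (A B : 'M[R]_(m, n)) := \sum_(i < m) \sum_(j < n) A i j * B i j.

Lemma fn2_ge0 m n (A : 'M[R]_(m, n)) : 0 <= fn2 A.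
Proof. by apply: sumr_ge0 => i _; apply: sumr_ge0 => j _; apply: sqr_ge0. Qed.

Lemma fnorm_ge0 m n (A : 'M[R]_(m, n)) : 0 <= fnorm A.
Proof. exact: sqrtr_ge0. Qed.

Lemma fnorm_sq m n (A : 'M[R]_(m, n)) : fnorm A ^+ 2 = fn2 A.
Proof. by rewrite /fnorm sqr_sqrtr // fn2_ge0. Qed.

Lemma fnorm_le m n (A : 'M[R]_(m, n)) c : 0 <= c -> fn2 A <= c ^+ 2 -> fnorm A <= c.
Proof.
by move=> c0 h; rewrite /fnorm -(ger0_norm c0) -sqrtr_sqr ler_sqrt // sqr_ge0.
Qed.

Lemma fnorm_le_fn2 m n p q (A : 'M[R]_(m, n)) (B : 'M[R]_(p, q)) :
  fnorm A <= fnorm B -> fn2 A <= fn2 B.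
Proof.
move=> h; rewrite -!fnorm_sq; have := fnorm_ge0 A; nra.
Qed.

Lemma fn2_eq0 m n (A : 'M[R]_(m, n)) : fn2 A = 0 -> A = 0.
Proof.
rewrite /fn2 => h; apply/matrixP => i j; rewrite mxE.
have h1 : \sum_(j < n) A i j ^+ 2 = 0.
  apply: (psumr_eq0P (i:=i) _ h isT) => k _; apply: sumr_ge0 => l _; exact: sqr_ge0.
have h2 : A i j ^+ 2 = 0.
  apply: (psumr_eq0P (i:=j) _ h1 isT) => k _; exact: sqr_ge0.
by move/eqP: h2; rewrite sqrf_eq0 => /eqP.
Qed.

Lemma fn2_dot m n (A : 'M[R]_(m, n)) : fn2 A = dotm A A.
Proof. by apply: eq_bigr => i _; apply: eq_bigr => j _; rewrite expr2. Qed.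

Lemma dotmC m n (A B : 'M[R]_(m, n)) : dotm A B = dotm B A.
Proof. by apply: eq_bigr => i _; apply: eq_bigr => j _; rewrite mulrC. Qed.

Lemma dotmDl m n (A B C : 'M[R]_(m, n)) : dotm (A + B) C = dotm A C + dotm B C.
Proof.
rewrite /dotm -big_split; apply: eq_bigr => i _; rewrite -big_split.
by apply: eq_bigr => j _; rewrite !mxE mulrDl.
Qed.

Lemma dotmZl m n a (A B : 'M[R]_(m, n)) : dotm (a *: A) B = a * dotm A B.
Proof.
rewrite /dotm mulr_sumr; apply: eq_bigr => i _; rewrite mulr_sumr.
by apply: eq_bigr => j _; rewrite !mxE mulrA.
Qed.

Lemma dotmNl m n (A B : 'M[R]_(m, n)) : dotm (- A) B = - dotm A B.
Proof. by rewrite -scaleN1r dotmZl mulN1r. Qed.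

Lemma fn2D m n (A B : 'M[R]_(m, n)) : fn2 (A + B) = fn2 A + 2 * dotm A B + fn2 B.
Proof.
rewrite !fn2_dot !dotmDl ![dotm _ (A + B)]dotmC !dotmDl (dotmC B A); ring.
Qed.

Lemma fn2Z m n a (A : 'M[R]_(m, n)) : fn2 (a *: A) = a ^+ 2 * fn2 A.
Proof. by rewrite !fn2_dot dotmZl dotmC dotmZl mulrA -expr2. Qed.

Lemma fn2N m n (A : 'M[R]_(m, n)) : fn2 (- A) = fn2 A.
Proof. by rewrite -scaleN1r fn2Z sqrrN expr1n mul1r. Qed.

Lemma quad_disc (a b c : R) : 0 <= a ->
  (forall t, 0 <= a * t ^+ 2 + 2 * b * t + c) -> b ^+ 2 <= a * c.
Proof.
move=> a0 h; case: (ltrP 0 a) => ap.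
  have := h (- b / a).
  have -> : a * (- b / a) ^+ 2 + 2 * b * (- b / a) + c = (a * c - b ^+ 2) / a.
    by field; rewrite gt_eqF.
  move=> h1; have : 0 <= (a * c - b ^+ 2) / a * a by apply: mulr_ge0 => //; exact: ltW.
  rewrite divfK ?gt_eqF //; lra.
have a00 : a = 0 by apply/eqP; rewrite eq_le ap a0.
subst a; case: (eqVneq b 0) => [->|bn0]; first by rewrite expr0n /= mul0r.
have := h (- (c + 1) / (2 * b)).
have -> : 0 * (- (c + 1) / (2 * b)) ^+ 2 + 2 * b * (- (c + 1) / (2 * b)) + c = -1.
  by field; rewrite ?bn0 ?pnatr_eq0 ?andbT //=.
lra.
Qed.

Lemma CS m n (A B : 'M[R]_(m, n)) : dotm A B ^+ 2 <= fn2 A * fn2 B.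
Proof.
apply: quad_disc; first exact: fn2_ge0. move=> t.
have -> : fn2 A * t ^+ 2 + 2 * dotm A B * t + fn2 B = fn2 (t *: A + B).
  by rewrite fn2D fn2Z dotmZl; ring.
exact: fn2_ge0.
Qed.

Lemma dot_le m n (A B : 'M[R]_(m, n)) : dotm A B <= fnorm A * fnorm B.
Proof.
have := CS A B; rewrite -!fnorm_sq -exprMn => h.
have := mulr_ge0 (fnorm_ge0 A) (fnorm_ge0 B).
move: h; set P := fnorm A * fnorm B; set d := dotm A B; nra.
Qed.

Lemma fnormD m n (A B : 'M[R]_(m, n)) : fnorm (A + B) <= fnorm A + fnorm B.
Proof.
apply: fnorm_le; first by rewrite addr_ge0 ?fnorm_ge0.
rewrite fn2D -!fnorm_sq; have := dot_le A B; nra.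
Qed.

Lemma fnormN m n (A : 'M[R]_(m, n)) : fnorm (- A) = fnorm A.
Proof. by rewrite /fnorm -/(fn2 _) fn2N. Qed.

Lemma fnormZ m n a (A : 'M[R]_(m, n)) : fnorm (a *: A) = `|a| * fnorm A.
Proof. by rewrite /fnorm -!/(fn2 _) fn2Z sqrtrM ?sqr_ge0 // sqrtr_sqr. Qed.

Lemma fnormB m n (A B : 'M[R]_(m, n)) : fnorm (A - B) <= fnorm A + fnorm B.
Proof. by rewrite -(fnormN B); apply: fnormD. Qed.

Lemma fn2_tr m n (A : 'M[R]_(m, n)) : fn2 A^T = fn2 A.
Proof. by rewrite /fn2 exchange_big; apply: eq_bigr => i _; apply: eq_bigr => j _; rewrite mxE. Qed.

Lemma fnorm_tr m n (A : 'M[R]_(m, n)) : fnorm A^T = fnorm A.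
Proof. by rewrite /fnorm -!/(fn2 _) fn2_tr. Qed.

Lemma fn2_rows m n (A : 'M[R]_(m, n)) : fn2 A = \sum_(i < m) fn2 (row i A).
Proof. by apply: eq_bigr => i _; rewrite /fn2 big_ord1; apply: eq_bigr => j _; rewrite mxE. Qed.

Lemma fn2_cols m n (A : 'M[R]_(m, n)) : fn2 A = \sum_(j < n) fn2 (col j A).
Proof.
rewrite /fn2 exchange_big; apply: eq_bigr => j _; apply: eq_bigr => i _.
by rewrite big_ord1 mxE.
Qed.

Lemma fn2_mul_le m n p (A : 'M[R]_(m, n)) (B : 'M[R]_(n, p)) :
  fn2 (A *m B) <= fn2 A * fn2 B.
Proof.
rewrite (fn2_rows A) (fn2_cols B) mulr_suml /fn2; apply: ler_sum => i _.
rewrite mulr_sumr; apply: ler_sum => j _.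
have := CS (row i A) (col j B)^T.
have -> : dotm (row i A) (col j B)^T = (A *m B) i j.
  by rewrite /dotm big_ord1 mxE; apply: eq_bigr => k _; rewrite !mxE.
by rewrite fn2_tr.
Qed.

Lemma fnorm_mul_le m n p (A : 'M[R]_(m, n)) (B : 'M[R]_(n, p)) :
  fnorm (A *m B) <= fnorm A * fnorm B.
Proof.
apply: fnorm_le; first by rewrite mulr_ge0 ?fnorm_ge0.
by rewrite exprMn !fnorm_sq fn2_mul_le.
Qed.

Lemma fnorm0 m n : fnorm (0 : 'M[R]_(m, n)) = 0.
Proof.
rewrite /fnorm big1 ?sqrtr0 // => i _; rewrite big1 // => j _; by rewrite mxE expr0n.
Qed.

Lemma fnorm_eq0 m n (A : 'M[R]_(m, n)) : fnorm A = 0 -> A = 0.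
Proof. by move=> h; apply: fn2_eq0; rewrite -fnorm_sq h expr0n. Qed.

Local Open Scope classical_set_scope.

Lemma snorm_has_sup m n (A : 'M[R]_(m, n)) :
  has_sup [set fnorm (A *m x) | x in [set x : 'cV[R]_n | fnorm x <= 1]].
Proof.
split; first by exists (fnorm (A *m (0 : 'cV[R]_n))), 0 => //=; rewrite ?fnorm0 ?ler01.
exists (fnorm A) => v [x /= hx <-].
apply: le_trans (fnorm_mul_le A x) _.
by rewrite -{2}(mulr1 (fnorm A)) ler_wpM2l ?fnorm_ge0.
Qed.

Lemma snorm_ge0 m n (A : 'M[R]_(m, n)) : 0 <= snorm A.
Proof.
have h : [set fnorm (A *m x) | x in [set x : 'cV[R]_n | fnorm x <= 1]] (fnorm (A *m (0 : 'cV[R]_n))).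
  by apply: imageP => /=; rewrite fnorm0 ler01.
have h2 := sup_upper_bound (snorm_has_sup A) h. exact: le_trans (fnorm_ge0 _) h2.
Qed.

Lemma snorm_vec m n (A : 'M[R]_(m, n)) (x : 'cV[R]_n) :
  fnorm (A *m x) <= snorm A * fnorm x.
Proof.
have [x0|xn0] := eqVneq (fnorm x) 0.
  by rewrite x0 mulr0 (fnorm_eq0 x0) mulmx0 fnorm0.
have xp : 0 < fnorm x by rewrite lt_def xn0 fnorm_ge0.
have : fnorm (A *m ((fnorm x)^-1 *: x)) <= snorm A.
  apply: (sup_upper_bound (snorm_has_sup A)); apply: imageP => /=.
  by rewrite fnormZ ger0_norm ?invr_ge0 ?fnorm_ge0 // mulVf.
rewrite -scalemxAr fnormZ ger0_norm ?invr_ge0 ?fnorm_ge0 // => h2.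
by rewrite -ler_pdivrMr // mulrC.
Qed.

Lemma snorm_le m n (A : 'M[R]_(m, n)) c : 0 <= c ->
  (forall x : 'cV[R]_n, fnorm (A *m x) <= c * fnorm x) -> snorm A <= c.
Proof.
move=> c0 h; apply: ge_sup; first by case: (snorm_has_sup A).
move=> v [x /= hx <-]; apply: le_trans (h x) _.
by rewrite -{2}(mulr1 c) ler_wpM2l.
Qed.

Lemma col_mulmx m n p (A : 'M[R]_(m, n)) (B : 'M[R]_(n, p)) j :
  col j (A *m B) = A *m col j B.
Proof. by rewrite !colE mulmxA. Qed.

Lemma fnorm_mulS m n p (A : 'M[R]_(m, n)) (B : 'M[R]_(n, p)) :
  fnorm (A *m B) <= snorm A * fnorm B.
Proof.
apply: fnorm_le; first by rewrite mulr_ge0 ?snorm_ge0 ?fnorm_ge0.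
rewrite exprMn fnorm_sq (fn2_cols (A *m B)) (fn2_cols B) mulr_sumr.
apply: ler_sum => j _; rewrite col_mulmx -!fnorm_sq.
have := snorm_vec A (col j B); have := fnorm_ge0 (A *m col j B).
have := fnorm_ge0 (col j B); have := snorm_ge0 A.
set a := fnorm _; set b := fnorm _; set s := snorm A; nra.
Qed.

Lemma dotm_tr m n (M N : 'M[R]_(m, n)) : dotm M N = \tr (M *m N^T).
Proof.
rewrite /dotm /mxtrace; apply: eq_bigr => i _; rewrite mxE.
by apply: eq_bigr => j _; rewrite mxE.
Qed.

Lemma dotm_mul m n p (A : 'M[R]_(m, n)) (u : 'M[R]_(n, p)) (v : 'M[R]_(m, p)) :
  dotm (A *m u) v = dotm u (A^T *m v).
Proof.
rewrite !dotm_tr trmx_mul trmxK -mulmxA mxtrace_mulC -mulmxA; congr (\tr _).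
Qed.

Lemma snorm_le_tr m n (A : 'M[R]_(m, n)) : snorm A <= snorm A^T.
Proof.
apply: snorm_le; first exact: snorm_ge0.
move=> x; have h : fn2 (A *m x) <= fnorm x * (snorm A^T * fnorm (A *m x)).
  rewrite fn2_dot dotm_mul; apply: le_trans (dot_le _ _) _.
  by rewrite ler_wpM2l ?fnorm_ge0 // snorm_vec.
move: h; rewrite -fnorm_sq.
have := fnorm_ge0 (A *m x); have := fnorm_ge0 x; have := snorm_ge0 A^T.
set a := fnorm (A *m x); set b := fnorm x; set s := snorm A^T => s0 b0 a0 h.
have [az|anz] := eqVneq a 0; first by rewrite az mulr_ge0.
have ap : 0 < a by rewrite lt_def anz a0.
rewrite -(ler_pM2r ap); rewrite expr2 in h; lra.
Qed.

Lemma snorm_tr m n (A : 'M[R]_(m, n)) : snorm A^T = snorm A.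
Proof.
apply/eqP; rewrite eq_le snorm_le_tr andbT.
by have := snorm_le_tr A^T; rewrite trmxK.
Qed.

Lemma fnorm_mulFS m n p (A : 'M[R]_(m, n)) (B : 'M[R]_(n, p)) :
  fnorm (A *m B) <= fnorm A * snorm B.
Proof.
by rewrite -fnorm_tr trmx_mul -(fnorm_tr A) -(snorm_tr B) mulrC fnorm_mulS.
Qed.

Lemma snorm_mul m n p (A : 'M[R]_(m, n)) (B : 'M[R]_(n, p)) :
  snorm (A *m B) <= snorm A * snorm B.
Proof.
apply: snorm_le; first by rewrite mulr_ge0 ?snorm_ge0.
move=> x; rewrite -mulmxA; apply: le_trans (fnorm_mulS _ _) _.
by rewrite -mulrA ler_wpM2l ?snorm_ge0 // fnorm_mulS.
Qed.

Lemma pythag k n (M : 'M[R]_(k, n)) (P : 'M[R]_n) :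
  P^T = P -> P *m P = P -> fn2 M = fn2 (M *m P) + fn2 (M - M *m P).
Proof.
move=> Ps Pi.
have h : dotm (M *m P) (M - M *m P) = 0.
  rewrite dotm_tr linearB /= trmx_mul Ps mulmxBr -!mulmxA (mulmxA P P) Pi subrr.
  by rewrite linear0.
have e : M = M *m P + (M - M *m P) by rewrite addrC subrK.
by rewrite {1}e (fn2D (M *m P)) h mulr0 addr0.
Qed.

Lemma core (u f s e a c b x : R) :
  0 <= u -> 0 < f -> 0 <= s -> 0 <= e -> s * e < 1 -> 0 <= a -> 0 <= c -> 0 <= b ->
  a ^+ 2 + c ^+ 2 <= (u * e) ^+ 2 -> u <= s * f -> x <= u + b -> 0 <= x ->
  (1 - s * e) * b <= s * a ->
  x ^+ 2 * f ^+ 2 * (1 - s * e) ^+ 2 <= u ^+ 2 * (1 + s * e) ^+ 2 * (f ^+ 2 - c ^+ 2).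
Proof.
move=> u0 f0 s0 e0 xi1 a0 c0 b0 hac huf hx x0 hb.
have [xi exi] : {xi | xi = s * e} by exists (s * e).
rewrite -exi in xi1 hb *.
have xi0 : 0 <= xi by rewrite exi mulr_ge0.
have [q eq] : {q | q = s * a} by exists (s * a).
rewrite -eq in hb.
have L1 : (1 - xi) * x <= (1 - xi) * u + q.
  have : (1 - xi) * x <= (1 - xi) * (u + b) by rewrite ler_wpM2l // subr_ge0 ltW.
  lra.
have L0 : 0 <= (1 - xi) * x by rewrite mulr_ge0 // subr_ge0 ltW.
have L2 : ((1 - xi) * x) ^+ 2 <= ((1 - xi) * u + q) ^+ 2.
  by rewrite ler_sqr ?nnegrE //; apply: le_trans L1.
have ae : a <= u * e.
  rewrite -ler_sqr ?nnegrE ?mulr_ge0 //; have := sqr_ge0 c; lra.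
have q0 : 0 <= q by rewrite eq mulr_ge0.
have qx : q <= u * xi.
  by rewrite eq exi mulrCA; rewrite ler_wpM2l.
have hc1 : s ^+ 2 * c ^+ 2 <= u ^+ 2 * xi ^+ 2 - q ^+ 2.
  have : s ^+ 2 * (a ^+ 2 + c ^+ 2) <= s ^+ 2 * (u * e) ^+ 2 by rewrite ler_wpM2l ?sqr_ge0.
  rewrite eq exi; move=> h; rewrite !exprMn in h *; nra.
have hu2 : u ^+ 2 <= s ^+ 2 * f ^+ 2.
  by rewrite -exprMn ler_sqr ?nnegrE ?mulr_ge0 // ltW.
have hc2 : u ^+ 2 * c ^+ 2 <= f ^+ 2 * (u ^+ 2 * xi ^+ 2 - q ^+ 2).
  have : u ^+ 2 * c ^+ 2 <= s ^+ 2 * f ^+ 2 * c ^+ 2 by rewrite ler_wpM2r ?sqr_ge0.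
  have : f ^+ 2 * (s ^+ 2 * c ^+ 2) <= f ^+ 2 * (u ^+ 2 * xi ^+ 2 - q ^+ 2).
    by rewrite ler_wpM2l ?sqr_ge0.
  lra.
have h4 : ((1 - xi) * u + q) ^+ 2 <= (1 + xi) ^+ 2 * (u ^+ 2 * (1 - xi ^+ 2) + q ^+ 2).
  have h5 : 2 * u * q * (1 - xi) <= 2 * u * u * xi * (1 - xi).
    have : 0 <= 2 * u * (1 - xi) by rewrite mulr_ge0 ?mulr_ge0 // subr_ge0 ltW.
    nra.
  have : 0 <= u ^+ 2 * (1 - xi) * (2 * xi + 3 * xi ^+ 2 + xi ^+ 3).
    have t1 : 0 <= 2 * xi + 3 * xi ^+ 2 + xi ^+ 3.
      by rewrite !addr_ge0 ?mulr_ge0 ?exprn_ge0.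
    have t2 : 0 <= 1 - xi by rewrite subr_ge0 ltW.
    by rewrite !mulr_ge0 ?sqr_ge0.
  have : 0 <= q ^+ 2 * xi * (2 + xi) by rewrite !mulr_ge0 ?sqr_ge0 // addr_ge0.
  nra.
have h6 : ((1 - xi) * u + q) ^+ 2 * f ^+ 2 <= (1 + xi) ^+ 2 * (u ^+ 2 * (1 - xi ^+ 2) + q ^+ 2) * f ^+ 2.
  by rewrite ler_wpM2r ?sqr_ge0.
have h7 : (1 + xi) ^+ 2 * (f ^+ 2 * (u ^+ 2 * xi ^+ 2 - q ^+ 2)) >= (1 + xi) ^+ 2 * (u ^+ 2 * c ^+ 2).
  by rewrite ler_wpM2l ?sqr_ge0.
have h8 : ((1 - xi) * x) ^+ 2 * f ^+ 2 <= ((1 - xi) * u + q) ^+ 2 * f ^+ 2.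
  by rewrite ler_wpM2r ?sqr_ge0.
rewrite exprMn in h8.
have -> : x ^+ 2 * f ^+ 2 * (1 - xi) ^+ 2 = (1 - xi) ^+ 2 * x ^+ 2 * f ^+ 2 by ring.
apply: (le_trans h8); apply: (le_trans h6).
have -> : u ^+ 2 * (1 + xi) ^+ 2 * (f ^+ 2 - c ^+ 2) =
   (1 + xi) ^+ 2 * (u ^+ 2 * f ^+ 2) - (1 + xi) ^+ 2 * (u ^+ 2 * c ^+ 2) by ring.
have -> : (1 + xi) ^+ 2 * (u ^+ 2 * (1 - xi ^+ 2) + q ^+ 2) * f ^+ 2 =
   (1 + xi) ^+ 2 * (u ^+ 2 * f ^+ 2) - (1 + xi) ^+ 2 * (f ^+ 2 * (u ^+ 2 * xi ^+ 2 - q ^+ 2)) by ring.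
lra.
Qed.

Lemma rho_K0 (c : 'I_0 -> nat) : ratio_rho R c = 0.
Proof. by rewrite /ratio_rho !big_ord0 mul0r sqrtr0. Qed.

Lemma rho_ge1 K (c : 'I_K -> nat) : (0 < K)%N -> (forall k, 0 < c k)%N ->
  1 <= ratio_rho R c.
Proof.
move=> K0 cp; rewrite /ratio_rho /=.
set cmax := (\max_(k < K) c k)%N.
set cmin := \big[minn/cmax]_(k < K) c k.
have hmax : (0 < cmax)%N.
  exact: leq_trans (cp (Ordinal K0)) (leq_bigmax (Ordinal K0)).
have h1 : (cmin <= cmax)%N.
  rewrite /cmin; apply: (big_ind (fun x => x <= cmax)%N) => //.
    by move=> x1 x2 h _; rewrite geq_min h.
  by move=> i _; apply: leq_bigmax.
have h2 : (0 < cmin)%N.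
  rewrite /cmin; apply: (big_ind (fun x => 0 < x)%N) => //.
  by move=> x1 x2 a b; rewrite leq_min a b.
have h3 : 1 <= (cmax%:R / cmin%:R : R).
  by rewrite ler_pdivlMr ?ltr0n // mul1r ler_nat.
by rewrite -[X in X <= _]sqrtr1 ler_sqrt ?divr_ge0 ?ler0n.
Qed.

Lemma final2 (x u f z2 w w' xi d rr nr : R) :
  0 <= x -> 0 <= u -> 0 < f -> 0 < z2 -> 0 <= w -> 0 <= w' -> 0 <= d -> 0 <= xi ->
  1 <= rr -> 1 <= nr -> nr * xi < 1 -> w' <= w * (1 + d) ->
  x ^+ 2 * f ^+ 2 * (1 - xi) ^+ 2 <= u ^+ 2 * (1 + xi) ^+ 2 * z2 ->
  x ^+ 2 * w' ^+ 2 / z2 <= u ^+ 2 * w ^+ 2 / f ^+ 2 * (1 + d) ^+ 2 * ((1 + rr * xi) / (1 - nr * xi)) ^+ 2.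
Proof.
move=> x0 u0 f0 z0 w0 w'0 d0 xi0 rr1 nr1 nxi hw hc.
have nxp : 0 < 1 - nr * xi by lra.
have xi1 : xi <= nr * xi by rewrite -{1}(mul1r xi) ler_wpM2r.
have xip : 0 < 1 - xi by lra.
set T := (1 + rr * xi) / (1 - nr * xi).
have T0 : 0 <= T by rewrite divr_ge0 //; [nra | lra].
have hT : 1 + xi <= T * (1 - xi).
  rewrite /T mulrAC ler_pdivlMr //.
  have : rr * xi >= xi by rewrite -{1}(mul1r xi) ler_wpM2r.
  nra.
have hT2 : (1 + xi) ^+ 2 <= T ^+ 2 * (1 - xi) ^+ 2.
  have a1 : 0 <= 1 + xi by lra.
  have a2 : 0 <= T * (1 - xi) by rewrite mulr_ge0 //; lra.
  by rewrite -exprMn ler_sqr ?nnegrE.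
have h1 : x ^+ 2 * f ^+ 2 * (1 - xi) ^+ 2 <= u ^+ 2 * T ^+ 2 * z2 * (1 - xi) ^+ 2.
  apply: le_trans hc _.
  have E1 : u ^+ 2 * (1 + xi) ^+ 2 * z2 = (1 + xi) ^+ 2 * (u ^+ 2 * z2) by ring.
  have E2 : u ^+ 2 * T ^+ 2 * z2 * (1 - xi) ^+ 2 = T ^+ 2 * (1 - xi) ^+ 2 * (u ^+ 2 * z2) by ring.
  by rewrite E1 E2 ler_wpM2r // mulr_ge0 ?sqr_ge0 // ltW.
have h2 : x ^+ 2 * f ^+ 2 <= u ^+ 2 * T ^+ 2 * z2.
  by move: h1; rewrite ler_pM2r // exprn_gt0.
have h3 : x ^+ 2 / z2 <= u ^+ 2 * T ^+ 2 / f ^+ 2.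
  by rewrite ler_pdivrMr // mulrAC ler_pdivlMr ?exprn_gt0.
have h4 : w' ^+ 2 <= w ^+ 2 * (1 + d) ^+ 2.
  have a1 : 0 <= w * (1 + d) by rewrite mulr_ge0 //; lra.
  by rewrite -exprMn ler_sqr ?nnegrE.
have -> : x ^+ 2 * w' ^+ 2 / z2 = (x ^+ 2 / z2) * w' ^+ 2 by rewrite mulrAC.
have -> : u ^+ 2 * w ^+ 2 / f ^+ 2 * (1 + d) ^+ 2 * T ^+ 2 =
   (u ^+ 2 * T ^+ 2 / f ^+ 2) * (w ^+ 2 * (1 + d) ^+ 2).
  by ring.
apply: ler_pM h3 h4; [apply: divr_ge0; [exact: sqr_ge0 | exact: ltW] | exact: sqr_ge0].
Qed.

End Fro.

Unset Implicit Arguments.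

Theorem corollary2 (R : realType) (K n r : nat)
    (y : 'I_n -> 'I_K) (g : 'I_r -> 'I_n)
    (W dW : 'M[R]_(r, n)) (Wp Wp' : 'M[R]_(n, r)) :
  injective g ->
  (forall k : 'I_K, (0 < ncls (fun i => y (g i)) k)%N) ->
  (forall i j, 0 <= W i j) ->
  (forall j, \sum_(i < r) W i j = 1) ->
  \rank W = r ->
  (forall i j, y (g i) != y j -> W i j = 0) ->
  is_pinv W Wp ->
  is_pinv (W + dW) Wp' ->
  let F := indicator R y in
  let xi := snorm Wp * snorm dW in
  let delta := fnorm dW / fnorm W in
  let nrho := ratio_rho R (ncls y) in
  let rrho := ratio_rho R (ncls (fun i => y (g i))) in
  let gamma := gammaF (F *m Wp) W in
  let gamma' := gammaF (F *m Wp') (W + dW) in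
  xi < 1 / nrho ->
  delta <= xi /\
  gamma' <= gamma * (1 + delta) ^+ 2 * ((1 + rrho * xi) / (1 - nrho * xi)) ^+ 2 /\
  gamma * (1 + delta) ^+ 2 * ((1 + rrho * xi) / (1 - nrho * xi)) ^+ 2
    <= gamma * (1 + rrho * xi) ^+ 4 / (1 - nrho * xi) ^+ 2.
Proof.
move=> ginj rpos W0 Wsum Wrank Wsupp [p1 p2 p3 p4] [q1 q2 q3 q4] F xi delta nrho rrho
  gamma gamma' hxi.
have s0 : 0 <= snorm Wp := snorm_ge0 Wp.
have e0 : 0 <= snorm dW := snorm_ge0 dW.
have xi0 : 0 <= xi by rewrite mulr_ge0.
have [Kz|K0] := posnP K.
  subst K; exfalso; move: hxi; rewrite /nrho rho_K0 invr0 mulr0; lra.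
have nK : forall k, (0 < ncls y k)%N.
  move=> k; have := rpos k; rewrite /ncls => /card_gt0P [i]; rewrite inE => hi.
  by apply/card_gt0P; exists (g i); rewrite inE.
have nr1 : 1 <= nrho := rho_ge1 R K0 nK.
have rr1 : 1 <= rrho := rho_ge1 R K0 rpos.
have nxi : nrho * xi < 1.
  by move: hxi; rewrite ltr_pdivlMr ?(lt_le_trans ltr01 nr1) // mulrC.
have xi1 : xi < 1.
  apply: le_lt_trans nxi; rewrite -{1}(mul1r xi); exact: ler_wpM2r.
have WWp : W *m Wp = 1%:M.
  have [B hB] : exists B, W *m B = 1%:M by apply/row_freeP; rewrite /row_free Wrank.
  by rewrite -[W *m Wp]mulmx1 -hB mulmxA p1.
set G : 'M[R]_(K, r) := \matrix_(k, i) (y (g i) == k)%:R.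
have FGW : F = G *m W.
  apply/matrixP => k j; rewrite !mxE.
  have [hk|hk] := eqVneq (y j) k.
    rewrite -(Wsum j); apply: eq_bigr => i _; rewrite mxE.
    have [hi|hi] := eqVneq (y (g i)) k; first by rewrite mul1r.
    by rewrite mul0r Wsupp // hk.
  rewrite big1 // => i _; rewrite mxE.
  have [hi|hi] := eqVneq (y (g i)) k; last by rewrite mul0r.
  by rewrite Wsupp ?mulr0 // hi eq_sym.
set X := F *m Wp.
have XW : X *m W = F by rewrite /X FGW -!mulmxA (mulmxA W Wp W) p1.
have XWWp : X *m (W *m Wp) = X by rewrite WWp mulmx1.
have hD : fnorm dW <= fnorm W * xi.
  have -> : dW = W *m (Wp *m dW) by rewrite mulmxA WWp mul1mx.
  apply: le_trans (fnorm_mulFS _ _) _.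
  by rewrite ler_wpM2l ?fnorm_ge0 // snorm_mul.
have hdelta : delta <= xi.
  rewrite /delta; have [w0|wn0] := eqVneq (fnorm W) 0.
    by rewrite w0 invr0 mulr0.
  have wp : 0 < fnorm W by rewrite lt_def wn0 fnorm_ge0.
  by rewrite ler_pdivrMr // mulrC.
have hDd : fnorm dW = fnorm W * delta.
  rewrite /delta; have [w0|wn0] := eqVneq (fnorm W) 0.
    have : fnorm dW <= 0 by move: hD; rewrite w0 mul0r.
    by have := fnorm_ge0 dW; rewrite w0 mul0r; lra.
  by rewrite mulrC divfK.
set W' := W + dW.
have W'Wp' : W' *m Wp' = 1%:M.
  set M := W' *m Wp' - 1%:M.
  have MW' : M *m W' = 0 by rewrite /M mulmxBl q1 mul1mx subrr.
  have eM : M = - (M *m dW *m Wp).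
    rewrite -{1}[M]mulmx1 -WWp mulmxA.
    have -> : W = W' - dW by rewrite /W' addrK.
    by rewrite mulmxBr MW' sub0r mulNmx.
  have hM : fnorm M <= fnorm M * xi.
    rewrite {1}eM fnormN; apply: le_trans (fnorm_mulFS _ _) _.
    rewrite /xi mulrA mulrAC ler_wpM2r //; exact: fnorm_mulFS.
  have : fnorm M = 0.
    have := fnorm_ge0 M; move: hM xi1 xi0; set mm := fnorm M; nra.
  move/fnorm_eq0; by move/eqP; rewrite subr_eq0 => /eqP.
set P := Wp' *m W'.
have Ps : P^T = P by [].
have Pi : P *m P = P by rewrite /P mulmxA q2.
set A := X *m dW.
set B := A *m Wp'.
set X' := F *m Wp'.
have eX' : X' = X - B.
  rewrite /X' -XW.
  have -> : W = W' - dW by rewrite /W' addrK.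
  by rewrite mulmxBr mulmxBl -mulmxA W'Wp' mulmx1.
have BW' : B *m W' = A *m P by rewrite /B /P mulmxA.
have hB : (1 - xi) * fnorm B <= snorm Wp * fnorm (A *m P).
  have h1 : fnorm B <= fnorm (B *m W) * snorm Wp.
    by rewrite -{1}[B]mulmx1 -WWp mulmxA fnorm_mulFS.
  have h2 : fnorm (B *m W) <= fnorm (A *m P) + fnorm B * snorm dW.
    have -> : W = W' - dW by rewrite /W' addrK.
    rewrite mulmxBr BW'; apply: le_trans (fnormB _ _) _.
    by rewrite lerD2l fnorm_mulFS.
  have : fnorm B <= snorm Wp * fnorm (A *m P) + xi * fnorm B.
    apply: le_trans h1 _; rewrite mulrC /xi.
    have := ler_wpM2l s0 h2; rewrite mulrDr; lra.
  lra.
set Z := X' *m W'.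
set C := A - A *m P.
have eZ1 : Z = F *m P by rewrite /Z /X' /P mulmxA.
have eZ2 : Z = F + C.
  by rewrite /Z eX' mulmxBl BW' /C /W' mulmxDr XW /A addrA.
have fZ : fn2 Z = fn2 F - fn2 C.
  have := pythag F Ps Pi; rewrite -eZ1.
  have -> : F - Z = - C by rewrite eZ2 opprD addNKr.
  rewrite fn2N; lra.
have fA : fn2 A = fn2 (A *m P) + fn2 C := pythag A Ps Pi.
have fpos : 0 < fnorm F.
  have /card_gt0P [i _] := rpos (Ordinal K0).
  rewrite lt_def fnorm_ge0 andbT; apply/negP => /eqP /fnorm_eq0 F0.
  have : F (y (g i)) (g i) = 0 by rewrite F0 mxE.
  by rewrite /F /indicator mxE eqxx => /eqP; rewrite oner_eq0.
have hac : fnorm (A *m P) ^+ 2 + fnorm C ^+ 2 <= (fnorm X * snorm dW) ^+ 2.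
  rewrite !fnorm_sq -fA -fnorm_sq ler_sqr ?nnegrE ?mulr_ge0 ?fnorm_ge0 //.
  exact: fnorm_mulFS.
have huf : fnorm X <= snorm Wp * fnorm F by rewrite mulrC fnorm_mulFS.
have hx : fnorm X' <= fnorm X + fnorm B by rewrite eX' fnormB.
have hcore := core (fnorm_ge0 X) fpos s0 e0 xi1 (fnorm_ge0 (A *m P)) (fnorm_ge0 C)
  (fnorm_ge0 B) hac huf hx (fnorm_ge0 X') hB.
have gE : gamma = fnorm X ^+ 2 * fnorm W ^+ 2 / fnorm F ^+ 2 by rewrite /gamma /gammaF -/X XW.
have g'E : gamma' = fnorm X' ^+ 2 * fnorm W' ^+ 2 / fnorm Z ^+ 2 by [].
have zE : fnorm Z ^+ 2 = fnorm F ^+ 2 - fnorm C ^+ 2 by rewrite !fnorm_sq fZ.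
have zpos : 0 < fnorm Z ^+ 2.
  rewrite zE; have h1 : fnorm X * snorm dW <= xi * fnorm F.
    by rewrite /xi mulrAC ler_wpM2r // mulrC.
  have h2 : 0 <= fnorm X * snorm dW by rewrite mulr_ge0 ?fnorm_ge0.
  have h3 : (fnorm X * snorm dW) ^+ 2 <= (xi * fnorm F) ^+ 2.
    by rewrite ler_sqr ?nnegrE // mulr_ge0 ?fnorm_ge0.
  have h4 : (xi * fnorm F) ^+ 2 < fnorm F ^+ 2.
    rewrite exprMn -{2}(mul1r (fnorm F ^+ 2)) ltr_pM2r ?exprn_gt0 //.
    have := mulr_ge0 xi0 xi0; rewrite expr2; nra.
  have := sqr_ge0 (fnorm (A *m P)); lra.
have hw : fnorm W' <= fnorm W * (1 + delta).
  by rewrite mulrDr mulr1 -hDd; apply: fnormD.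
have d0 : 0 <= delta by rewrite divr_ge0 ?fnorm_ge0.
rewrite -zE in hcore.
split => //; split.
  rewrite g'E gE.
  exact: (final2 (fnorm_ge0 X') (fnorm_ge0 X) fpos zpos (fnorm_ge0 W) (fnorm_ge0 W')
    d0 xi0 rr1 nr1 nxi hw hcore).
have gam0 : 0 <= gamma.
  by rewrite gE; apply: divr_ge0; [apply: mulr_ge0|]; exact: sqr_ge0.
have hd2 : (1 + delta) ^+ 2 <= (1 + rrho * xi) ^+ 2.
  have : xi <= rrho * xi by rewrite -{1}(mul1r xi) ler_wpM2r.
  have : 0 <= rrho * xi by rewrite mulr_ge0 //; lra.
  move=> a b; rewrite ler_sqr ?nnegrE; lra.
rewrite expr_div_n.
have -> : gamma * (1 + rrho * xi) ^+ 4 / (1 - nrho * xi) ^+ 2 =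
  gamma * (1 + rrho * xi) ^+ 2 * ((1 + rrho * xi) ^+ 2 / (1 - nrho * xi) ^+ 2) by ring.
apply: ler_wpM2r; first by apply: divr_ge0; exact: sqr_ge0.
exact: ler_wpM2l.
Qed.
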